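(* (Intersection Indicium Magnification Theorem.) Let $K$ be a perfect field and let $K\subseteq L\subseteq M$ be finite extensions inside $\bar K$. Let $F/K$ be a finite Galois extension of degree $d$ such that $M'=MF$ is obtained by strong cluster magnification from $M/K$ through $F/K$ and $L'=LF$ is obtained by strong cluster magnification from $L/K$ through $F/K$. Then $\tau_K(M',L')=d\cdot\tau_K(M,L)$.
   Context: $\bar K$ is a fixed algebraic closure of $K$; $\tilde E$ denotes the Galois closure in $\bar K$ of a finite extension $E/K$. A finite extension $M/K$ is obtained by strong cluster magnification from a subextension $L/K$ through a finite Galois extension $F/K$ if $[L:K]>2$, $\tilde L\cap F=K$, and $LF=M$; $d=[F:K]$ is the magnification factor. For finite extensions $L/K$, $M/K$, let $L_1,\dots,L_a$ be all the distinct subfields of $M$ isomorphic to $L$ over $K$; the intersection indicium is $\tau_K(M,L)=[L_1\cap\cdots\cap L_a:K]$ if $a\ge 1$ and $\tau_K(M,L)=0$ if $a=0$. *)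

(* Defs.v *)
From HB Require Import structures.
From mathcomp Require Import all_boot all_order all_algebra all_field.
Set Implicit Arguments. Unset Strict Implicit. Unset Printing Implicit Defensive.
Import GRing.Theory.
Local Open Scope ring_scope.

Definition perfect_field (K : fieldType) : Prop :=
  forall p : nat, p \in [pchar K] -> forall x : K, exists y : K, y ^+ p = x.

Section Ambient.
Variables (K : fieldType) (Om : splittingFieldType K).
(* Om plays the role of (a finite normal part of) the algebraic closure of K;
   K itself is the subfield 1%AS of Om. *)

Definition isGalClosure (E G : {subfield Om}) : Prop :=
  [/\ galois 1%VS G, (E <= G)%VS &
      forall G' : {subfield Om}, galois 1%VS G' -> (E <= G')%VS -> (G <= G')%VS].

Definition strong_cluster_magnification (L F M : {subfield Om}) : Prop :=
  [/\ (2 < \dim L)%N, galois 1%VS F,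
      exists G, isGalClosure L G /\ (G :&: F)%VS = 1%VS
    & (L * F)%AS = M].

Definition iso_subfield (M L E : {subfield Om}) : Prop :=
  (E <= M)%VS /\ exists f : 'End(Om), kHom 1%VS L f /\ (f @: L)%VS = E.

Definition is_indicium (M L : {subfield Om}) (t : nat) : Prop :=
  ((forall E, ~ iso_subfield M L E) /\ t = 0%N) \/
  ((exists E, iso_subfield M L E) /\
   exists V : {vspace Om},
     (forall x, x \in V <-> forall E, iso_subfield M L E -> x \in E) /\
     t = \dim V).
End Ambient.

(* Main.v *)
Require Import Defs.
From HB Require Import structures.
From mathcomp Require Import all_boot all_order all_algebra all_fingroup all_field.
Set Implicit Arguments. Unset Strict Implicit. Unset Printing Implicit Defensive.
Import GRing.Theory.

Section Aux.
Local Open Scope ring_scope.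
Variables (K : fieldType) (Om : splittingFieldType K).
Implicit Types (G F E : {subfield Om}) (U V : {vspace Om}).

Lemma polyOver_cap U V (p : {poly Om}) :
  p \is a polyOver U -> p \is a polyOver V -> p \is a polyOver (U :&: V)%VS.
Proof.
move=> /polyOverP hU /polyOverP hV; apply/polyOverP => i.
by rewrite memv_cap hU hV.
Qed.

Lemma minPoly_disj G F a : galois 1 F -> (G :&: F)%VS = 1%VS -> a \in F ->
  minPoly G a = minPoly 1 a.
Proof.
move=> /and3P[_ _ nF] cap Fa.
move/normalFieldP: nF => nF; have [r /allP rF spl] := nF a Fa.
have /dvdp_prod_XsubC[m hm]: minPoly G a %| \prod_(b <- r) ('X - b%:P).
  by rewrite -spl minPolyS ?sub1v.
have eq1 : minPoly G a = \prod_(b <- mask m r) ('X - b%:P).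
  by apply/eqP; rewrite -eqp_monic ?monic_prod_XsubC ?monic_minPoly.
have qF : minPoly G a \is a polyOver F.
  rewrite eq1 big_seq; apply: rpred_prod => b /mem_mask /rF Fb.
  by rewrite rpredB ?polyOverX ?polyOverC.
have q1 : minPoly G a \is a polyOver 1%VS.
  by rewrite -cap polyOver_cap ?minPolyOver.
have d1 : minPoly 1 a %| minPoly G a by rewrite minPoly_dvdp ?root_minPoly.
have d2 : minPoly G a %| minPoly 1 a by rewrite minPolyS ?sub1v.
by apply/eqP; rewrite -eqp_monic ?monic_minPoly //; apply/andP.
Qed.


Lemma dim_GF G F : galois 1 F -> (G :&: F)%VS = 1%VS ->
  (\dim G * \dim F <= \dim (G * F))%N.
Proof.
move=> galF cap; have /and3P[s1F sepF _] := galF.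
set a := separable_generator 1 F.
have defF := eq_adjoin_separable_generator sepF s1F.
have Fa : a \in F := separable_generator_mem F 1.
have dF : \dim F = adjoin_degree 1 a by rewrite {1}defF dim_Fadjoin dimv1 muln1.
have eqdeg : adjoin_degree G a = adjoin_degree 1 a.
  have := size_minPoly G a; rewrite (minPoly_disj galF cap Fa) size_minPoly.
  by move=> /succn_inj e; exact: esym e.
rewrite dF -eqdeg mulnC -dim_Fadjoin; apply: dimvS.
apply/FadjoinP; split; first exact: field_subvMr.
exact: (subvP (field_subvMl G F)).
Qed.


Lemma nz_basis F (j : 'I_(\dim F)) : (vbasis F)`_j != 0.
Proof.
apply: free_not0 (basis_free (vbasisP F)) _.
by apply: mem_nth; rewrite size_tuple.
Qed.

Lemma basis_memF F (j : 'I_(\dim F)) : (vbasis F)`_j \in F.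
Proof. by apply: vbasis_mem; apply: mem_nth; rewrite size_tuple. Qed.

Lemma prodv_basis U F :
  (U * F)%VS = (\sum_(j < \dim F) U * <[(vbasis F)`_j]>)%VS.
Proof.
rewrite -{1}(span_basis (vbasisP F)) span_def big_distrr /= (big_nth 0).
by rewrite big_mkord size_tuple.
Qed.

Lemma memv_prodF U F x : x \in (U * F)%VS ->
  exists2 g : 'I_(\dim F) -> Om, (forall j, g j \in U) &
     x = \sum_j g j * (vbasis F)`_j.
Proof.
rewrite prodv_basis => /memv_sumP [vs Hvs ->].
exists (fun j => vs j / (vbasis F)`_j) => [j|].
  by have [u Uu ->] := memv_cosetP (Hvs j isT); rewrite mulfK ?nz_basis.
by apply: eq_bigr => j _; rewrite divfK ?nz_basis.
Qed.

Lemma mem_prodF U F (g : 'I_(\dim F) -> Om) : (forall j, g j \in U) ->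
  \sum_j g j * (vbasis F)`_j \in (U * F)%VS.
Proof. by move=> Ug; apply: rpred_sum => j _; rewrite memv_mul ?basis_memF. Qed.

Lemma indepF G F : galois 1 F -> (G :&: F)%VS = 1%VS ->
  forall g : 'I_(\dim F) -> Om, (forall j, g j \in G) ->
  \sum_j g j * (vbasis F)`_j = 0 -> forall j, g j = 0.
Proof.
move=> galF cap.
have dx : directv (\sum_(j < \dim F) G * <[(vbasis F)`_j]>)%VS.
  rewrite directvEgeq /= -prodv_basis.
  rewrite (eq_bigr (fun _ => \dim G)) => [|j _]; last first.
    by rewrite dim_cosetv_unit // unitfE nz_basis.
  by rewrite sum_nat_const card_ord mulnC; exact: dim_GF.
move=> g Gg s0 j.
have := (directv_sum_independent dx) (fun j => g j * (vbasis F)`_j) _ s0 j isT.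
  move=> /(_ _)/eqP; rewrite mulf_eq0 (negPf (nz_basis j)) orbF => h.
  by apply/eqP; apply: h => i _; rewrite memv_mul ?memv_line.
Qed.

Lemma dimUF U G F : (U <= G)%VS -> galois 1 F -> (G :&: F)%VS = 1%VS ->
  \dim (U * F) = (\dim U * \dim F)%N.
Proof.
move=> sUG galF cap.
have dx : directv (\sum_(j < \dim F) U * <[(vbasis F)`_j]>)%VS.
  apply/directv_sum_independent => us Uus s0 j _.
  have Hu i : us i / (vbasis F)`_i \in U.
    by have [u Uu ->] := memv_cosetP (Uus i isT); rewrite mulfK ?nz_basis.
  have h : us j / (vbasis F)`_j = 0.
    apply: (indepF galF cap (g := fun i => us i / (vbasis F)`_i)) => [i|].
      exact: (subvP sUG _ (Hu i)).
    by apply: etrans s0; apply: eq_bigr => i _; rewrite divfK ?nz_basis.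
  by rewrite -[us j](divfK (nz_basis j)) h mul0r.
rewrite prodv_basis (directvP dx) /=.
rewrite (eq_bigr (fun _ => \dim U)) => [|j _]; last first.
  by rewrite dim_cosetv_unit // unitfE nz_basis.
by rewrite sum_nat_const card_ord mulnC.
Qed.


Lemma iso_galP M L E : iso_subfield M L E <->
  (E <= M)%VS /\ exists2 s : gal_of {:Om}, s \in 'Gal({:Om} / 1)%g & (s @: L)%VS = E.
Proof.
split.
  move=> [sEM [f [hf fE]]]; split => //.
  have [s sG Df] := @kHom_to_gal _ _ 1%AS L {:Om}%AS f
    (introT andP (conj (sub1v L) (subvf L))) (normalFieldf _) hf.
  by exists s; rewrite // -fE (eq_in_limg Df).
move=> [sEM [s sG sE]]; split => //; exists s; split; last exact: sE.
have : kHom 1 {:Om} s by rewrite -gal_kHom ?sub1v.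
by apply: kHomSr; apply: subvf.
Qed.

Lemma gal_normal (s : gal_of {:Om}) (N : {subfield Om}) : s \in 'Gal({:Om} / 1)%g ->
  normalField 1 N -> (s @: N)%VS = N.
Proof.
move=> sG nN.
have hA : kAut 1 {:Om} s by rewrite -gal_kAut ?sub1v.
have := @normalField_kAut _ _ 1%AS N {:Om}%AS s
    (introT andP (conj (sub1v N) (subvf N))) nN hA.
by case/andP => _ /eqP.
Qed.

Lemma gal_prod (s : gal_of {:Om}) (L : {vspace Om}) F : s \in 'Gal({:Om} / 1)%g ->
  normalField 1 F -> (s @: (L * F))%VS = (s @: L * F)%VS.
Proof. by move=> sG nF; rewrite aimgM gal_normal. Qed.

Lemma sub_M E (M : {subfield Om}) G F : galois 1 F -> (G :&: F)%VS = 1%VS -> (M <= G)%VS ->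
  (E <= G)%VS -> (E <= M * F)%VS -> (E <= M)%VS.
Proof.
move=> galF cap sMG sEG sEMF.
set W := (G :&: (M * F))%VS.
have sMW : (M <= W)%VS by rewrite subv_cap sMG field_subvMr.
have sWF : (W * F <= (M * F)%AS)%VS.
  by apply: prodv_sub; [apply: capvSr | apply: field_subvMl].
have := dimvS sWF.
rewrite /= (dimUF (capvSl _ _) galF cap) (dimUF sMG galF cap) leq_pmul2r ?adim_gt0 //.
move=> dWM; have eMW : asval M = W by apply/eqP; rewrite eqEdim sMW.
by rewrite eMW subv_cap sEG.
Qed.

End Aux.

Unset Implicit Arguments. Set Strict Implicit. Set Printing Implicit Defensive.

Theorem mainTheorem6 (K : fieldType) (Om : splittingFieldType K)
  (hK : perfect_field K) (L M F L' M' : {subfield Om})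
  (hLM : (L <= M)%VS)
  (hM' : strong_cluster_magnification M F M')
  (hL' : strong_cluster_magnification L F L') :
  exists t : nat, is_indicium M L t /\ is_indicium M' L' (\dim F * t)%N.
Proof.
case: hM' => _ galF [G [[galG sMG _] cap]] defM'.
case: hL' => _ _ _ defL'.
have nF : normalField 1 F by case/and3P: galF.
have nG : normalField 1 G by case/and3P: galG.
pose P := fun s : gal_of {:Om} => (s \in 'Gal({:Om} / 1)%g) && (s @: L <= M)%VS.
pose V := (\bigcap_(s | P s) (s @: L))%VS.
have gal1 : (1%g : gal_of {:Om}) \in 'Gal({:Om} / 1)%g by apply: group1.
have im1 : ((1%g : gal_of {:Om}) @: L)%VS = L.
  by rewrite -{2}(lim1g L); apply: eq_in_limg => a _; rewrite gal_id id_lfunE.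
have P1 : P 1%g by rewrite /P gal1 im1 hLM.
have sVL : (V <= L)%VS.
  by have := @bigcapv_inf _ _ _ 1%g P (fun s => s @: L)%VS L P1; rewrite im1 subvv; apply.
have sVG : (V <= G)%VS := subv_trans sVL (subv_trans hLM sMG).
have isoL : iso_subfield M L L.
  by split => //; exists \1%VF; split; [apply: kHom1 | apply: lim1g].
exists (\dim V); split.
  right; split; first by exists L.
  exists V; split => // x; split.
    move=> xV E /iso_galP [sEM [s sG sE]].
    rewrite -sE; move: xV; rewrite !memvE => /subv_bigcapP; apply.
    by rewrite /P sG sE sEM.
  move=> H; rewrite memvE; apply/subv_bigcapP => s /andP[sG sLM].
  rewrite -memvE; apply: (H (s @: L)%AS); apply/iso_galP; split => //.
  by exists s.
subst M' L'.
have isoLF : iso_subfield (M * F)%AS (L * F)%AS (L * F)%AS.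
  split; first exact: prodvSl.
  by exists \1%VF; split; [apply: kHom1 | apply: lim1g].
have isoE s : P s -> iso_subfield (M * F)%AS (L * F)%AS (s @: L * F)%AS.
  case/andP => sG sLM; apply/iso_galP; split; first exact: prodvSl.
  by exists s; rewrite // gal_prod.
right; split.
  by exists (L * F)%AS.
exists (V * F)%VS; split; last first.
  by rewrite (dimUF sVG galF cap) mulnC.
move=> x; split.
  move=> xVF E' /iso_galP [sEM [s sG sE]].
  rewrite -sE /= gal_prod //.
  have sLG : (s @: L <= G)%VS.
    by rewrite -(gal_normal sG nG); apply: limgS; apply: subv_trans hLM sMG.
  have sLM : (s @: L <= M)%VS.
    apply: (sub_M galF cap sMG sLG); apply: subv_trans sEM.
    by rewrite -sE gal_prod //= field_subvMr.
  have sVs : (V <= s @: L)%VS.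
    by apply: bigcapv_inf (subvv _); rewrite /P sG sLM.
  by apply: (subvP (prodvSl F sVs)).
move=> H.
have xLF : x \in (L * F)%VS by apply: (H (L * F)%AS).
have [g Gg xg] := memv_prodF (subvP (prodvSl F (subv_trans hLM sMG)) _ xLF).
rewrite xg; apply: mem_prodF => j.
rewrite memvE; apply/subv_bigcapP => s Ps; rewrite -memvE.
have := H _ (isoE s Ps); rewrite /= => /memv_prodF [e Ee xe].
have sLG : (s @: L <= G)%VS.
  by rewrite -(gal_normal (proj1 (andP Ps)) nG); apply: limgS; apply: subv_trans hLM sMG.
have eq0 : (g j - e j = 0)%R.
  apply: (indepF galF cap (g := fun i => (g i - e i)%R)) => [i|].
    by rewrite rpredB // (subvP sLG).
  rewrite (eq_bigr (fun i => g i * (vbasis F)`_i - e i * (vbasis F)`_i)%R) => [|i _].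
    by rewrite sumrB -xg -xe subrr.
  exact: mulrBl.
by move/eqP: eq0; rewrite subr_eq0 => /eqP ->.
Qed.
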